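(* Let $\mathcal{A}=(A_1,\dots,A_4)\in H^0(\bigwedge^2\mathcal{F}\otimes\mathcal{E}\otimes\det\mathcal{E}^\vee)$, let $p\in\mathbb{P}^1$ with uniformizer $u$, and fix $1\le I<J\le5$, $1\le K\le4$. Suppose that (i) $a^{(K)}_{IJ}\equiv0\pmod{u^2}$; (ii) $a^{(k)}_{IJ}\equiv0\pmod u$ for all $1\le k\le4$; (iii) $a^{(K)}_{Ij}\equiv0\pmod u$ for all $1\le j\le5$; (iv) $a^{(K)}_{iJ}\equiv0\pmod u$ for all $1\le i\le5$. Then $\mathcal{A}$ is singular above $p$.
   Context: Work over $\mathbb{C}$. Fix $g\ge0$, $N=g+4$, $\mathcal{E}\cong\bigoplus_{k=1}^4\mathcal{O}_{\mathbb{P}^1}(e_k)$ with $e_1\le\dots\le e_4$, $\sum e_k=N$, and $\mathcal{F}\cong\bigoplus_{i=1}^5\mathcal{O}(f_i)$ with $f_1\le\dots\le f_5$, $\sum f_i=2N$, with these splittings fixed; $d^{(k)}_{ij}=f_i+f_j+e_k-N$. A section $\mathcal{A}\in H^0(\bigwedge^2\mathcal{F}\otimes\mathcal{E}\otimes\det\mathcal{E}^\vee)$ is a quadruple $(A_1,\dots,A_4)$ of $5\times5$ alternating matrices whose $(i,j)$ entry $a^{(k)}_{ij}$ of $A_k$ is a homogeneous form in $\mathbb{C}[s,t]$ of degree $d^{(k)}_{ij}$ (zero if this is negative), $a^{(k)}_{ji}=-a^{(k)}_{ij}$. Let $\mathcal{A}(\mathbf{x})=\sum_k A_kx_k$, and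 let $C_{\mathcal{A}}\subset\mathbb{P}(\mathcal{E})$ (fiber coordinates $x_1,\dots,x_4$) be the closed subscheme cut out by the five $4\times4$ principal sub-Pfaffians of $\mathcal{A}(\mathbf{x})$. $\mathcal{A}$ is smooth at a point $P\in C_{\mathcal{A}}$ if the Zariski tangent space of $C_{\mathcal{A}}$ at $P$ is 1-dimensional, and singular at $P$ otherwise; $\mathcal{A}$ is singular above $p\in\mathbb{P}^1$ if it is singular at some point of $C_{\mathcal{A}}$ lying over $p$. For a form $a$ and a uniformizer (linear form) $u$ at $p$, $a\equiv0\pmod{u^m}$ means $u^m$ divides $a$. *)

(* Defs.v *)
From HB Require Import structures.
From mathcomp Require Import all_boot all_order all_algebra.
From mathcomp Require Import mpoly.
Set Implicit Arguments. Unset Strict Implicit. Unset Printing Implicit Defensive.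
Import Order.TTheory GRing.Theory Num.Theory.
Local Open Scope ring_scope.

Section Defs.
Variable F : fieldType.

(* Binary forms: elements of F[s,t] = {mpoly F[2]}; variable 0 is s, 1 is t. *)

Definition dvd_pow (u a : {mpoly F[2]}) (m : nat) : Prop :=
  exists b : {mpoly F[2]}, a = u ^+ m * b.

(* p = [p_0 : p_1] is a point of P^1 (homogeneous coordinates, not both 0). *)
Definition P1_point (p : 'I_2 -> F) : Prop := exists i, p i != 0.

Definition uniformizer (p : 'I_2 -> F) (u : {mpoly F[2]}) : Prop :=
  [/\ u \is 1.-homog, u != 0 & u.@[p] = 0].

(* The data (g, e, f, A): splitting types and a section A = (A_1..A_4) of
   wedge^2 F (x) E (x) det E^vee, i.e. 4 alternating 5x5 matrices of binary
   forms, a^(k)_ij homogeneous of degree d^(k)_ij = f_i + f_j + e_k - N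
   (zero if this degree is negative), N = g + 4. Indices are 0-based. *)
Definition splitting_data (g : nat) (e : 'I_4 -> int) (f : 'I_5 -> int) : Prop :=
  [/\ (forall i j : 'I_4, (i <= j)%N -> e i <= e j),
      \sum_(k < 4) e k = (g + 4)%:Z,
      (forall i j : 'I_5, (i <= j)%N -> f i <= f j) &
      \sum_(i < 5) f i = (2 * (g + 4))%:Z].

Definition is_section (g : nat) (e : 'I_4 -> int) (f : 'I_5 -> int)
  (A : 'I_4 -> 'I_5 -> 'I_5 -> {mpoly F[2]}) : Prop :=
  [/\ (forall k i, A k i i = 0),
      (forall k i j, A k j i = - A k i j) &
      (forall k i j,
         let d := f i + f j + e k - (g + 4)%:Z in
         (0 <= d -> A k i j \is (absz d).-homog) /\ (d < 0 -> A k i j = 0))].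

(* Principal 4x4 sub-Pfaffians of a 5x5 alternating matrix M: Pf_m is the
   Pfaffian of M with row and column m deleted. *)
Definition pf4 (R : comPzRingType) (M : 'I_4 -> 'I_4 -> R) : R :=
  M 0 1 * M 2 3 - M 0 2 * M 1 3 + M 0 3 * M 1 2.

Definition subpf (R : comPzRingType) (M : 'I_5 -> 'I_5 -> R) (m : 'I_5) : R :=
  pf4 (fun i j : 'I_4 => M (lift m i) (lift m j)).

Definition fiberM (A : 'I_4 -> 'I_5 -> 'I_5 -> {mpoly F[2]}) (p : 'I_2 -> F)
  (x : 'I_4 -> F) (i j : 'I_5) : F :=
  \sum_(k < 4) (A k i j).@[p] * x k.

(* The point [x] of P^3 = P(E)_p lies on C_A. *)
Definition on_CA A p (x : 'I_4 -> F) : Prop :=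
  (exists k, x k != 0) /\ forall m, subpf (fiberM A p x) m = 0.

(* Local chart of P^1 around p: lambda |-> p + lambda q, with q not
   proportional to p; in this chart every O(d) is trivialised by v^d where
   v is the linear form with v(p)=1, v(q)=0, so that P(E) is A^1 x P^3 with
   fiber coordinates x_1..x_4 and C_A is cut out by the sub-Pfaffians of
   sum_k a^(k)_ij(p + lambda q) x_k. *)
Definition chartq (p : 'I_2 -> F) : 'I_2 -> F :=
  fun r => if p ord_max != 0 then (r == ord0)%:R else (r == ord_max)%:R.

(* The matrix A(lambda, x) evaluated at the dual-number point
   (lambda, x) = (eps*mu, x + eps*xi), computed in F[eps] (eps = 'X). *)
Definition dualM (A : 'I_4 -> 'I_5 -> 'I_5 -> {mpoly F[2]}) (p : 'I_2 -> F)
  (x : 'I_4 -> F) (mu : F) (xi : 'I_4 -> F) (i j : 'I_5) : {poly F} :=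
  \sum_(k < 4)
     mmap (@polyC F) (fun r => (p r)%:P + (mu * chartq p r) *: 'X) (A k i j)
     * ((x k)%:P + (xi k) *: 'X).

(* Jacobian of the 5 local equations w.r.t. the 5 coordinates
   (lambda, x_1, .., x_4) at (0, x): entry (m, c) is the eps-coefficient of
   Pf_m at the point displaced by eps along the c-th coordinate. *)
Definition jacobian A p (x : 'I_4 -> F) : 'M[F]_(5, 5) :=
  \matrix_(m < 5, c < 5)
     (subpf (dualM A p x (c == ord0)%:R (fun k => (c == lift ord0 k)%:R)) m)`_1.

(* Zariski tangent space of C_A at P = (p, [x]), computed in the affine
   chart {x_r = 1} of the fiber (r = first index with x_r <> 0): row vectors
   v in F^5 (coordinates lambda, x_1..x_4) with J v = 0 and v_(x_r) = 0. *)
Definition chart_index (x : 'I_4 -> F) : 'I_4 := odflt ord0 [pick r | x r != 0].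

Definition tangent_space A p (x : 'I_4 -> F) : 'M[F]_5 :=
  (kermx (jacobian A p x)^T
     :&: kermx (delta_mx (lift ord0 (chart_index x)) ord0 : 'M[F]_(5, 1)))%MS.

Definition tangent_dim A p x : nat := \rank (tangent_space A p x).

Definition singular_at A p x : Prop := on_CA A p x /\ tangent_dim A p x != 1%N.

Definition singular_above A p : Prop := exists x, singular_at A p x.

End Defs.

(* Main.v *)
Require Import Defs.
From HB Require Import structures.
From mathcomp Require Import all_boot all_order all_algebra.
From mathcomp Require Import mpoly.
From mathcomp Require Import zify.
Import Order.TTheory GRing.Theory Num.Theory.
Local Open Scope ring_scope.
Section Aux.
Variable F : fieldType.

Lemma coef1M (a b : {poly F}) : (a*b)`_1 = a`_0*b`_1 + a`_1*b`_0.
Proof. by rewrite coefM big_ord_recl big_ord1 /=. Qed.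

Lemma mmap_coef0 (h : 'I_2 -> {poly F}) (q : {mpoly F[2]}) :
  (mmap (@polyC F) h q)`_0 = q.@[fun r => (h r)`_0].
Proof.
rewrite mevalE /mmap coef_sum; apply eq_bigr => m _.
rewrite coefCM /mmap1 -horner_coef0 horner_prod; congr (_ * _); apply eq_bigr => i _.
by rewrite horner_exp horner_coef0.
Qed.

Lemma ord4E (x : 'I_4) : x = 0 \/ x = 1 \/ x = 2%:R \/ x = 3%:R.
Proof.
case: x => [[|[|[|[|x]]]] Hx] //.
- by left; apply/val_inj.
- by right; left; apply/val_inj.
- by right; right; left; apply/val_inj.
- by right; right; right; apply/val_inj.
Qed.

Lemma pf4_zero (R : comPzRingType) (N : 'I_4 -> 'I_4 -> R) a :
  (forall j, N a j = 0) -> (forall j, N j a = 0) -> pf4 N = 0.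
Proof.
move=> H1 H2; rewrite /pf4.
case: (ord4E a) H1 H2 => [->|[->|[->|->]]] H1 H2; rewrite ?H1 ?H2 ?mul0r ?mulr0 ?subr0 ?sub0r ?addr0 ?add0r ?oppr0. all: by [].
Qed.

Lemma pf4_coef1 (N : 'I_4 -> 'I_4 -> {poly F}) (a b : 'I_4) : a != b ->
  (forall j, (N a j)`_0 = 0) -> (forall j, (N j a)`_0 = 0) ->
  (forall j, (N b j)`_0 = 0) -> (forall j, (N j b)`_0 = 0) ->
  (N a b)`_1 = 0 -> (N b a)`_1 = 0 -> (pf4 N)`_1 = 0.
Proof.
move=> nab H1 H2 H3 H4 H5 H6; rewrite /pf4 coefD coefB !coef1M.
case: (ord4E a) nab H1 H2 H5 H6 => [->|[->|[->|->]]];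
case: (ord4E b) H3 H4 => [->|[->|[->|->]]] => H3 H4 nab H1 H2 H5 H6 //;
rewrite ?H1 ?H2 ?H3 ?H4 ?H5 ?H6 ?mul0r ?mulr0 ?subr0 ?sub0r ?addr0 ?add0r ?oppr0.
all: by [].
Qed.
End Aux.
Section Main.
Variable F : fieldType.
Variables (A : 'I_4 -> 'I_5 -> 'I_5 -> {mpoly F[2]}) (p : 'I_2 -> F).

Definition hh (mu : F) := fun r : 'I_2 => (p r)%:P + (mu * chartq p r) *: ('X : {poly F}).

Lemma hh0 mu r : (hh mu r)`_0 = p r.
Proof. by rewrite /hh coefD coefC coefZ coefX /= mulr0 addr0. Qed.

Lemma phi0 mu q : (mmap (@polyC F) (hh mu) q)`_0 = q.@[p].
Proof. rewrite mmap_coef0; apply: meval_eq => r; exact: hh0. Qed.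

Lemma dualM_eq x mu xi i j : dualM A p x mu xi i j =
  \sum_(k < 4) mmap (@polyC F) (hh mu) (A k i j) * ((x k)%:P + (xi k) *: 'X).
Proof. by []. Qed.

Lemma dual0 x mu xi i j : (dualM A p x mu xi i j)`_0 = fiberM A p x i j.
Proof.
rewrite dualM_eq /fiberM coef_sum; apply eq_bigr => k _.
by rewrite coef0M phi0 coefD coefC coefZ coefX /= mulr0 addr0.
Qed.

Lemma dual1 x mu xi i j : (dualM A p x mu xi i j)`_1 =
  \sum_(k < 4) ((A k i j).@[p] * xi k + (mmap (@polyC F) (hh mu) (A k i j))`_1 * x k).
Proof.
rewrite dualM_eq coef_sum; apply eq_bigr => k _.
by rewrite coef1M phi0 !coefD !coefC !coefZ !coefX /= mulr0 addr0 add0r mulr1.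
Qed.

Lemma phiM mu (a b : {mpoly F[2]}) :
  mmap (@polyC F) (hh mu) (a * b) = mmap (@polyC F) (hh mu) a * mmap (@polyC F) (hh mu) b.
Proof. by rewrite rmorphM. Qed.

Lemma phiN mu (a : {mpoly F[2]}) :
  mmap (@polyC F) (hh mu) (- a) = - mmap (@polyC F) (hh mu) a.
Proof. by rewrite raddfN. Qed.
End Main.
Theorem lemma3p2 (F : closedFieldType) (hchar : [pchar F] =i pred0)
  (g : nat) (e : 'I_4 -> int) (f : 'I_5 -> int) (hef : splitting_data g e f)
  (A : 'I_4 -> 'I_5 -> 'I_5 -> {mpoly F[2]}) (hA : is_section g e f A)
  (p : 'I_2 -> F) (hp : P1_point p) (u : {mpoly F[2]}) (hu : uniformizer p u)
  (I J : 'I_5) (hIJ : (I < J)%N) (K : 'I_4)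
  (h1 : dvd_pow u (A K I J) 2)
  (h2 : forall k : 'I_4, dvd_pow u (A k I J) 1)
  (h3 : forall j : 'I_5, dvd_pow u (A K I j) 1)
  (h4 : forall i : 'I_5, dvd_pow u (A K i J) 1) :
  singular_above A p.
Proof.
case: hA => _ hanti _.
case: hu => _ _ hu0.
have ev0 q : (u ^+ 1 * q).@[p] = 0 by rewrite mevalM expr1 hu0 mul0r.
have dv0 q m : dvd_pow u q m.+1 -> q.@[p] = 0.
  by case=> b ->; rewrite exprS -mulrA -(expr1 u) ev0.
have nIJ : I != J by rewrite neq_ltn hIJ.
pose x := fun k : 'I_4 => ((k == K)%:R : F).
have fib i j : fiberM A p x i j = (A K i j).@[p].
  rewrite /fiberM (bigD1 K) //= big1 => [|k nk]; first by rewrite /x eqxx mulr1 addr0.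
  by rewrite /x (negbTE nk) mulr0.
have ZI1 j : fiberM A p x I j = 0 by rewrite fib; apply: (dv0 _ 0%N).
have ZI2 j : fiberM A p x j I = 0 by rewrite fib hanti mevalN (dv0 _ 0%N) ?oppr0.
have ZJ1 j : fiberM A p x J j = 0 by rewrite fib hanti mevalN (dv0 _ 0%N) ?oppr0.
have ZJ2 j : fiberM A p x j J = 0 by rewrite fib; apply: (dv0 _ 0%N).
exists x; split.
  split; first by exists K; rewrite /x eqxx oner_neq0.
  move=> m; rewrite /subpf.
  case: (unliftP m I) => [a Ha|Hm].
    by apply: (@pf4_zero _ _ a) => j /=; rewrite -Ha.
  case: (unliftP m J) => [a Ha|HJ].
    by apply: (@pf4_zero _ _ a) => j /=; rewrite -Ha.
  by move: nIJ; rewrite Hm HJ eqxx.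
have Jrow m c : m != I -> m != J -> jacobian A p x m c = 0.
  move=> mI mJ; rewrite /jacobian mxE /subpf.
  case: (unliftP m I) => [a Ha|Hm]; last by rewrite Hm eqxx in mI.
  case: (unliftP m J) => [b Hb|Hm]; last by rewrite Hm eqxx in mJ.
  apply: (@pf4_coef1 F _ a b).
  - by apply: contra nIJ => /eqP ab; rewrite Ha Hb ab.
  - by move=> j /=; rewrite -Ha dual0.
  - by move=> j /=; rewrite -Ha dual0.
  - by move=> j /=; rewrite -Hb dual0.
  - by move=> j /=; rewrite -Hb dual0.
  - rewrite /= -Ha -Hb dual1 big1 // => k _.
    rewrite (dv0 _ 0%N (h2 k)) mul0r add0r /x; case: (eqVneq k K) => [->|_]; last by rewrite mulr0.
    case: h1 => b0 ->; rewrite expr2 -mulrA phiM coef1M phiM coef0M !phi0 hu0.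
    by rewrite !mul0r mulr0 addr0 mul0r.
  - rewrite /= -Ha -Hb dual1 big1 // => k _.
    rewrite hanti mevalN (dv0 _ 0%N (h2 k)) oppr0 mul0r add0r /x; case: (eqVneq k K) => [->|_]; last by rewrite mulr0.
    case: h1 => b0 ->; rewrite phiN coefN expr2 -mulrA phiM coef1M phiM coef0M !phi0 hu0.
    by rewrite ?mul0r ?mulr0 ?addr0 ?oppr0 ?mul0r.
have dm (a : 'I_5) m c : (delta_mx a a *m jacobian A p x) m c = (m == a)%:R * jacobian A p x a c.
  rewrite mxE (bigD1 a) //= big1 ?addr0 => [|k ka]; rewrite mxE ?eqxx ?andbT //.
  by rewrite (negbTE ka) andbF mul0r.
have Jdec : jacobian A p x = delta_mx I I *m jacobian A p x + delta_mx J J *m jacobian A p x.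
  apply/matrixP => m c; rewrite [RHS]mxE !dm.
  case: (eqVneq m I) => [->|mI]; first by rewrite (negbTE nIJ) mul1r mul0r addr0.
  case: (eqVneq m J) => [->|mJ]; first by rewrite mul1r mul0r add0r.
  by rewrite !mul0r addr0 Jrow.
have rJ : (\rank (jacobian A p x) <= 2)%N.
  rewrite Jdec; apply: leq_trans (mxrank_add _ _) _.
  have := mxrankM_maxl (delta_mx I I) (jacobian A p x).
  have := mxrankM_maxl (delta_mx J J) (jacobian A p x).
  rewrite !mxrank_delta; lia.
rewrite /tangent_dim /tangent_space.
set K1 := kermx (jacobian A p x)^T.
set K2 := kermx (delta_mx (lift ord0 (chart_index x)) ord0 : 'M[F]_(5,1)).
have := rank_leq_col (K1 + K2)%MS.
have := mxrank_sum_cap K1 K2.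
rewrite /K1 /K2 !mxrank_ker mxrank_tr mxrank_delta.
lia.
Qed.
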